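(* Let $\mathbf i'=\zeta_k\mathbf i$ be a 6-move. The 6-move degree map $\mathbf g'\mapsto\mathbf g$ on $\mathbb Z^{\oplus\mathbb N}$ (defined in the context) sends the cone $C_{\mathbf i'}$ into the cone $C_{\mathbf i}$.
   Context: $\mathfrak g$ is a complex finite-dimensional simple Lie algebra with index set $I$ and Cartan matrix $\mathsf C=(\mathsf c_{i,j})$. $\mathbb N=\{1,2,\dots\}$, $[a]_+=\max(a,0)$. $I^{(\infty)}$: sequences $\mathbf i=(i_u)_{u\in\mathbb N}\in I^{\mathbb N}$ with every element of $I$ occurring infinitely often; $u^-_{\mathbf i}=\max(\{v<u:i_v=i_u\}\cup\{0\})$. A 6-move $\mathbf i'=\zeta_k\mathbf i$: $i_k=i_{k+2}=i_{k+4}=i'_{k+1}=i'_{k+3}=i'_{k+5}$, $i_{k+1}=i_{k+3}=i_{k+5}=i'_k=i'_{k+2}=i'_{k+4}$, $i_u=i'_u$ for $u\notin[k,k+5]$, $\mathsf c_{i_{k+1},i_k}\mathsf c_{i_k,i_{k+1}}=3$. Put $i=i_k$, $j=i_{k+1}$. The 6-move degree map: for $\mathbf g'=(g'_u)$ set $A=g'_{k+2}-\mathsf c_{j,i}[g'_{k+1}]_+$, $B=g'_{k+3}-[-g'_{k+1}]_+$, $C=-g'_{k+1}-\mathsf c_{i,j}[A]_+-[-B]_+$, $D=g'_k+\mathsf c_{j,i}[-g'_{k+1}]_+-2[-A]_++\mathsf c_{j,i}[-C]_+$, $E=-A-\mathsf c_{j,i}[C]_++[D]_+$, $F=-C+\mathsf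 c_{i,j}[-D]_+$, $G=-B-[-C]_++\mathsf c_{i,j}[-E]_++[F]_+$, $H=-D+[E]_++\mathsf c_{j,i}[-F]_+$, $I=-F+[G]_++\mathsf c_{i,j}[-H]_+$; then $g_{k^-_{\mathbf i}}=g'_{(k+1)^-_{\mathbf i'}}+[g'_{k+1}]_++[B]_+-[-G]_+-[-I]_+$ (if $k^-_{\mathbf i}>0$), $g_{(k+1)^-_{\mathbf i}}=g'_{k^-_{\mathbf i'}}+[D]_+-\mathsf c_{j,i}[F]_++2[H]_+-\mathsf c_{j,i}[I]_+$ (if $(k+1)^-_{\mathbf i}>0$), $g_k=-I$, $g_{k+1}=-H+\mathsf c_{j,i}[-I]_+$, $g_{k+2}=-G+[I]_+$, $g_{k+3}=-E+\mathsf c_{j,i}[-G]_++[H]_+$, $g_{k+4}=g'_{k+5}-[-B]_++[G]_+$, $g_{k+5}=g'_{k+4}-[-A]_+-\mathsf c_{j,i}[B]_++[E]_+$, $g_u=g'_u$ otherwise. Cone: $C_{\mathbf i}=\{\mathbf g\in\mathbb Z^{\oplus\mathbb N}:\sum_{v\ge u,\,i_v=i_u}g_v\ge0\ \forall u\in\mathbb N\}$. *)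

(* Defs.v *)
From mathcomp Require Import all_boot all_order all_algebra.
Set Implicit Arguments. Unset Strict Implicit. Unset Printing Implicit Defensive.
Import Order.TTheory GRing.Theory Num.Theory.
Local Open Scope ring_scope.

Definition posp (a : int) : int := Num.max a 0.

(* Cartan matrix of a complex finite-dimensional simple Lie algebra, with index
   set I: an indecomposable generalized Cartan matrix of finite type, i.e.
   c_ii = 2, c_ij <= 0 for i <> j, c_ij = 0 <-> c_ji = 0, symmetrizable by a
   positive diagonal matrix D with D C positive definite, and indecomposable. *)
Definition simple_cartan (I : finType) (C : I -> I -> int) : Prop :=
  (exists i0 : I, True) /\
  (forall i, C i i = 2) /\
  (forall i j, i != j -> C i j <= 0) /\
  (forall i j, (C i j == 0) = (C j i == 0)) /\
      (exists d : I -> int,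
          (forall i, 0 < d i) /\
          (forall i j, d i * C i j = d j * C j i) /\
          (forall x : I -> rat, (exists i, x i != 0) ->
             0 < \sum_(i : I) \sum_(j : I) x i * (d i)%:~R * (C i j)%:~R * x j)) /\
  (forall J : {set I}, J != set0 -> J != setT ->
          exists i j, [/\ i \in J, j \notin J & C i j != 0]).

(* Sequences i = (i_u)_{u in N}, N = {1,2,...}, represented as nat -> I where
   only the values at u >= 1 matter. *)
Definition infinite_seq (I : finType) (s : nat -> I) : Prop :=
  forall (a : I) (n : nat), exists u, (n < u)%N /\ s u = a.

Definition uminus (I : finType) (s : nat -> I) (u : nat) : nat :=
  \max_(1 <= v < u | s v == s u) v.

Definition six_move (I : finType) (C : I -> I -> int) (k : nat)
    (s s' : nat -> I) : Prop :=
  [/\ (0 < k)%N,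
      s k = s (k+2)%N /\ s k = s (k+4)%N /\ s k = s' (k+1)%N /\
      s k = s' (k+3)%N /\ s k = s' (k+5)%N,
      s (k+1)%N = s (k+3)%N /\ s (k+1)%N = s (k+5)%N /\ s (k+1)%N = s' k /\
      s (k+1)%N = s' (k+2)%N /\ s (k+1)%N = s' (k+4)%N,
      (forall u, (0 < u)%N -> (u < k)%N \/ (k+5 < u)%N -> s u = s' u)
    & C (s (k+1)%N) (s k) * C (s k) (s (k+1)%N) = 3].

Definition finsupp (g : nat -> int) : Prop :=
  exists N : nat, forall u, (N <= u)%N -> g u = 0.

(* the cone C_s: for all u in N, sum_{v >= u, s_v = s_u} g_v >= 0
   (the sum is finite; it is computed up to any bound beyond the support) *)
Definition in_cone (I : finType) (s : nat -> I) (g : nat -> int) : Prop :=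
  forall u : nat, (0 < u)%N ->
    forall N : nat, (forall v, (N <= v)%N -> g v = 0) ->
      0 <= \sum_(u <= v < N | s v == s u) g v.

Definition six_move_deg (I : finType) (C : I -> I -> int) (k : nat)
    (s s' : nat -> I) (g' : nat -> int) : nat -> int :=
  let i := s k in let j := s (k+1)%N in
  let cji := C j i in let cij := C i j in
  let A := g' (k+2)%N - cji * posp (g' (k+1)%N) in
  let B := g' (k+3)%N - posp (- g' (k+1)%N) in
  let C' := - g' (k+1)%N - cij * posp A - posp (- B) in
  let D := g' k + cji * posp (- g' (k+1)%N) - 2 * posp (- A) + cji * posp (- C') in
  let E := - A - cji * posp C' + posp D in
  let F := - C' + cij * posp (- D) in
  let G := - B - posp (- C') + cij * posp (- E) + posp F in
  let H := - D + posp E + cji * posp (- F) in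
  let I' := - F + posp G + cij * posp (- H) in
  let km := uminus s k in let k1m := uminus s (k+1)%N in
  fun u =>
    if (u == km) && (0 < km)%N then
      g' (uminus s' (k+1)%N) + posp (g' (k+1)%N) + posp B - posp (- G) - posp (- I')
    else if (u == k1m) && (0 < k1m)%N then
      g' (uminus s' k) + posp D - cji * posp F + 2 * posp H - cji * posp I'
    else if u == k then - I'
    else if u == (k+1)%N then - H + cji * posp (- I')
    else if u == (k+2)%N then - G + posp I'
    else if u == (k+3)%N then - E + cji * posp (- G) + posp H
    else if u == (k+4)%N then g' (k+5)%N - posp (- B) + posp G
    else if u == (k+5)%N then g' (k+4)%N - posp (- A) - cji * posp B + posp E
    else g' u.

(* Main.v *)
Require Import Defs.
From mathcomp Require Import all_boot all_order all_algebra.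
Local Open Scope ring_scope.
From mathcomp Require Import zify ring.
Import Order.TTheory GRing.Theory Num.Theory.
Local Open Scope ring_scope.
Lemma posp_cases (a : int) : (0 <= a /\ posp a = a) \/ (a < 0 /\ posp a = 0).
Proof.
rewrite /posp; case: (lerP 0 a) => h.
  by left; split => //; rewrite max_l.
by right; split => //; rewrite max_r // ltW.
Qed.

Lemma pospN (a : int) : posp (- a) = posp a - a.
Proof. case: (posp_cases a) => -[h ->]; case: (posp_cases (-a)) => -[h' ->]; lia. Qed.

Ltac sp t := let p := fresh "p" in let h := fresh "h" in let e := fresh "e" in
  let hc := fresh "hc" in have hc := posp_cases t;
  set (p := posp t) in *; clearbody p;
  case: hc => -[h e]; subst p; try (exfalso; lia).

Lemma core (a b x0 x1 x2 x3 x4 x5 Ti Tj vA vB vC vD vE vF vG vH vI : int) :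
 (a = -1 /\ b = -3) \/ (a = -3 /\ b = -1) ->
 vA = x2 - b * posp x1 -> vB = x3 - posp (- x1) ->
 vC = - x1 - a * posp vA - posp (- vB) ->
 vD = x0 + b * posp (- x1) - 2 * posp (- vA) + b * posp (- vC) ->
 vE = - vA - b * posp vC + posp vD -> vF = - vC + a * posp (- vD) ->
 vG = - vB - posp (- vC) + a * posp (- vE) + posp vF ->
 vH = - vD + posp vE + b * posp (- vF) ->
 vI = - vF + posp vG + a * posp (- vH) ->
 0 <= x5 + Ti -> 0 <= x3 + x5 + Ti -> 0 <= x1 + x3 + x5 + Ti ->
 0 <= x4 + Tj -> 0 <= x2 + x4 + Tj -> 0 <= x0 + x2 + x4 + Tj ->
 (posp x1 + posp vB - posp (- vG) - posp (- vI) + (- vI) + (- vG + posp vI)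
       + (x5 - posp (- vB) + posp vG) = x1 + x3 + x5) /\ (
     posp vD - b * posp vF + 2 * posp vH - b * posp vI + (- vH + b * posp (- vI))
       + (- vE + b * posp (- vG) + posp vH) + (x4 - posp (- vA) - b * posp vB + posp vE)
       = x0 + x2 + x4) /\ (
     0 <= (x5 - posp (- vB) + posp vG) + Ti) /\ (
     0 <= (- vG + posp vI) + (x5 - posp (- vB) + posp vG) + Ti) /\ (
     0 <= (- vI) + (- vG + posp vI) + (x5 - posp (- vB) + posp vG) + Ti) /\ (0 <= (x4 - posp (- vA) - b * posp vB + posp vE) + Tj) /\ (0 <= (- vE + b * posp (- vG) + posp vH) + (x4 - posp (- vA) - b * posp vB + posp vE) + Tj) /\ (
     0 <= (- vH + b * posp (- vI)) + (- vE + b * posp (- vG) + posp vH)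
            + (x4 - posp (- vA) - b * posp vB + posp vE) + Tj).
Proof.
rewrite !pospN => hab eA eB eC eD eE eF eG eH eI Q1 Q2 Q3 Q4 Q5 Q6.
case: hab => -[? ?]; subst a b;
sp x1; sp vA; sp vB; sp vC; sp vD; sp vE; sp vF; sp vG; sp vH; sp vI;
repeat split; lia.
Qed.
Lemma pair13 (a b : int) : a <= 0 -> b <= 0 -> b * a = 3 -> (a = -1 /\ b = -3) \/ (a = -3 /\ b = -1).
Proof.
move=> ha hb h.
have hb1 : b <= -1.
  case: (ltrP b 0) => // hb'; have e : b = 0 by lia.
  by move: h; rewrite e mul0r.

have h2 : 0 <= (-a) * (-b - 1) by apply: mulr_ge0; lia.
have e : (-a) * (-b - 1) = b * a + a by ring.
rewrite e h in h2.
have : a = -1 \/ a = -2 \/ a = -3 by lia.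
move=> [ea|[ea|ea]]; rewrite ea in h *; nia.
Qed.

Lemma max_spec (P : pred nat) n :
  (forall v, (0 < v < n)%N -> P v -> (v <= \max_(1 <= w < n | P w) w)%N) /\
  ((0 < \max_(1 <= w < n | P w) w)%N ->
     (\max_(1 <= w < n | P w) w < n)%N /\ P (\max_(1 <= w < n | P w) w)).
Proof.
elim: n => [|n [IH1 IH2]].
  by rewrite big_geq //; split => // v; lia.
case: (posnP n) => [->|n0].
  by rewrite big_geq //; split => // v; lia.
rewrite big_mkcond big_nat_recr //= -big_mkcond.
move: IH1 IH2; set m := \max_(1 <= w < n | P w) w => IH1 IH2.
case: ifP => Pn.
  have -> : maxn m n = n.
    apply/maxn_idPr; case: (posnP m) => [->//|m0]; by move: (IH2 m0) => [/ltnW].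
  by split => // v; lia.
rewrite maxn0; split.
  move=> v hv Pv; apply: IH1 => //; have : v != n by apply/eqP => e; rewrite e Pn in Pv.
  lia.
by move=> /IH2 [h1 h2]; split => //; lia.
Qed.
Lemma deg_unfold (I : finType) (C : I -> I -> int) (k : nat) (s s' : nat -> I) (g' : nat -> int) :
  let a := C (s k) (s (k+1)%N) in let b := C (s (k+1)%N) (s k) in
  exists vA vB vC vD vE vF vG vH vI : int,
  [/\ vA = g' (k+2)%N - b * posp (g' (k+1)%N), vB = g' (k+3)%N - posp (- g' (k+1)%N),
      vC = - g' (k+1)%N - a * posp vA - posp (- vB),
      vD = g' k + b * posp (- g' (k+1)%N) - 2 * posp (- vA) + b * posp (- vC) &
      vE = - vA - b * posp vC + posp vD] /\
  [/\ vF = - vC + a * posp (- vD), vG = - vB - posp (- vC) + a * posp (- vE) + posp vF,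
      vH = - vD + posp vE + b * posp (- vF), vI = - vF + posp vG + a * posp (- vH) &
  forall u, six_move_deg C k s s' g' u =
    if (u == uminus s k) && (0 < uminus s k)%N then
      g' (uminus s' (k+1)%N) + posp (g' (k+1)%N) + posp vB - posp (- vG) - posp (- vI)
    else if (u == uminus s (k+1)%N) && (0 < uminus s (k+1)%N)%N then
      g' (uminus s' k) + posp vD - b * posp vF + 2 * posp vH - b * posp vI
    else if u == k then - vI
    else if u == (k+1)%N then - vH + b * posp (- vI)
    else if u == (k+2)%N then - vG + posp vI
    else if u == (k+3)%N then - vE + b * posp (- vG) + posp vH
    else if u == (k+4)%N then g' (k+5)%N - posp (- vB) + posp vG
    else if u == (k+5)%N then g' (k+4)%N - posp (- vA) - b * posp vB + posp vE
    else g' u].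
Proof.
move=> a b; do 9 eexists; split; split; try reflexivity.

Qed.
Lemma peel (f : nat -> int) (P : pred nat) w M : (w < M)%N ->
  \sum_(w <= v < M | P v) f v = (if P w then f w else 0) + \sum_(w.+1 <= v < M | P v) f v.
Proof. by move=> h; rewrite big_ltn_cond //; case: (P w); rewrite ?add0r. Qed.

Lemma L_eq (f f' : nat -> int) (P P' : pred nat) u n :
  (forall v, (u <= v < n)%N -> P v = P' v) ->
  (forall v, (u <= v < n)%N -> P v -> f v = f' v) ->
  \sum_(u <= v < n | P v) f v = \sum_(u <= v < n | P' v) f' v.
Proof.
move=> hP hf; rewrite big_mkcond [RHS]big_mkcond; apply: eq_big_nat => v hv.
rewrite -hP //; case: ifP => // Pv; exact: hf.
Qed.

Lemma L_split (f f' : nat -> int) (P P' : pred nat) u p n : (u <= p < n)%N ->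
  (forall v, (u <= v < n)%N -> P v = P' v) ->
  (forall v, (u <= v < n)%N -> v != p -> P v -> f v = f' v) ->
  \sum_(u <= v < n | P v) f v = \sum_(u <= v < n | P' v) f' v + (if P p then f p - f' p else 0).
Proof.
move=> /andP[h1 h2] hP hf.
rewrite (big_cat_nat h1 (ltnW h2)) [in RHS](big_cat_nat h1 (ltnW h2)).
rewrite [in LHS](peel _ _ _ _ h2) [in RHS](peel _ _ _ _ h2) -hP; last by rewrite h1.
rewrite /=.
have e1 : \sum_(u <= v < p | P v) f v = \sum_(u <= v < p | P' v) f' v.
  apply: L_eq => v hv; first by apply: hP; move: hv; lia.
  move=> Pv; apply: hf => //; first by move: hv; lia.
  by apply/eqP => e; move: hv; rewrite e; lia.
have e2 : \sum_(p.+1 <= v < n | P v) f v = \sum_(p.+1 <= v < n | P' v) f' v.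
  apply: L_eq => v hv; first by apply: hP; move: hv; lia.
  move=> Pv; apply: hf => //; first by move: hv; lia.
  by apply/eqP => e; move: hv; rewrite e; lia.
rewrite e1 e2.
by case: (P p); ring.
Qed.

Lemma ext_bound (f : nat -> int) (P : pred nat) u N M :
  (forall v, (N <= v)%N -> f v = 0) -> (N <= M)%N ->
  \sum_(u <= v < N | P v) f v = \sum_(u <= v < M | P v) f v.
Proof.
move=> hf hNM; case: (leqP u N) => huN.
  have z : \sum_(N <= v < M | P v) f v = 0.
    by rewrite big_nat_cond big1 // => v /andP[hv _]; apply: hf; move: hv; lia.
  by rewrite (big_cat_nat huN hNM) /= z addr0.
have z : \sum_(u <= v < M | P v) f v = 0.
  by rewrite big_nat_cond big1 // => v /andP[hv _]; apply: hf; move: hv; lia.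
by rewrite z big_geq // ltnW.
Qed.
Theorem lemma3p14 (I : finType) (C : I -> I -> int) (k : nat)
    (s s' : nat -> I) (g' : nat -> int) :
  simple_cartan C ->
  infinite_seq s -> infinite_seq s' ->
  six_move C k s s' ->
  finsupp g' ->
  in_cone s' g' ->
  in_cone s (six_move_deg C k s s' g').
Proof.
move=> hC hs hs' [k0 [e2 [e4 [e1' [e3' e5']]]] [f3 [f5 [f0' [f2' f4']]]] hout h3] [N' hN'] hcone.
have [vA [vB [vC [vD [vE [vF [vG [vH [vI [[eA eB eC eD eE] [eF eG eH eI hG]]]]]]]]]]] :=
  deg_unfold I C k s s' g'.
move: hG; set G := six_move_deg C k s s' g' => hG.
rewrite ?addnS ?addn0 in e2 e4 e1' e3' e5' f3 f5 f0' f2' f4' hout h3 eA eB eC eD eE eF eG eH eI hG.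
have [_ [hdiag [hoff _]]] := hC.
have hij : s k != s k.+1.
  by apply/eqP => e; move: h3; rewrite -e hdiag.
have hji : s k.+1 != s k by rewrite eq_sym.
have hab := pair13 _ _ (hoff _ _ hij) (hoff _ _ hji) h3.
have hout' : forall v, (0 < v < k)%N -> s' v = s v.
  by move=> v hv; rewrite hout //; [lia | left; lia].
have hout'' : forall v, (k + 5 < v)%N -> s' v = s v.
  by move=> v hv; rewrite hout //; [lia | right; lia].
have [km1 km2] : (forall v, (0 < v < k)%N -> s v == s k -> (v <= uminus s k)%N) /\ ((0 < uminus s k)%N -> (uminus s k < k)%N /\ s (uminus s k) == s k) :=
  max_spec (fun v => s v == s k) k.
have [k1m1 k1m2] : (forall v, (0 < v < k.+1)%N -> s v == s k.+1 -> (v <= uminus s k.+1)%N) /\ ((0 < uminus s k.+1)%N -> (uminus s k.+1 < k.+1)%N /\ s (uminus s k.+1) == s k.+1) :=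
  max_spec (fun v => s v == s k.+1) k.+1.
have hu1 : uminus s' k.+1 = uminus s k.
  rewrite /uminus -e1' big_mkcond big_nat_recr //= -f0' (negbTE hji) maxn0.
  rewrite [RHS]big_mkcond; apply: eq_big_nat => v hv; rewrite hout' //.
have hu2 : uminus s' k = uminus s k.+1.
  rewrite /uminus -f0' [RHS]big_mkcond big_nat_recr //= (negbTE hij) maxn0.
  rewrite big_mkcond; apply: eq_big_nat => v hv; rewrite hout' //.
rewrite hu1 hu2 in hG.
move: km1 km2 k1m1 k1m2 hG; set km := uminus s k; set k1m := uminus s k.+1.
move=> km1 km2 k1m1 k1m2 hG.
have H1 : (km < k)%N \/ km = 0%N.
  by case: (posnP km) => [->|/km2 []]; [right|left].
have H2 : (k1m < k)%N \/ k1m = 0%N.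
  case: (posnP k1m) => [->|/k1m2 [h1 h2]]; [by right|left].
  have : k1m != k by apply/eqP => e; move: h2; rewrite e (negbTE hij).
  lia.
have H3 : km = 0%N \/ km <> k1m.
  case: (posnP km) => [->|hk]; [by left|right] => e.
  have [_ h2] := km2 hk.
  have : (0 < k1m)%N by rewrite -e.
  by move=> /k1m2 [_]; rewrite -e (eqP h2) (negbTE hij).
move: km1 km2 k1m1 k1m2 hab hout hout' hout'' hcone hC hoff hdiag.
have Gk : G k = - vI by (rewrite hG; clear hG; repeat (case: ifP => ?; try (exfalso; lia)); try done).
have Gk1 : G k.+1 = - vH + C (s k.+1) (s k) * posp (- vI) by (rewrite hG; clear hG; repeat (case: ifP => ?; try (exfalso; lia)); try done).
have Gk2 : G k.+2 = - vG + posp vI by (rewrite hG; clear hG; repeat (case: ifP => ?; try (exfalso; lia)); try done).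
have Gk3 : G k.+3 = - vE + C (s k.+1) (s k) * posp (- vG) + posp vH by (rewrite hG; clear hG; repeat (case: ifP => ?; try (exfalso; lia)); try done).
have Gk4 : G k.+4 = g' k.+1.+4 - posp (- vB) + posp vG by (rewrite hG; clear hG; repeat (case: ifP => ?; try (exfalso; lia)); try done).
have Gk5 : G k.+1.+4 = g' k.+4 - posp (- vA) - C (s k.+1) (s k) * posp vB + posp vE.
  by (rewrite hG; clear hG; repeat (case: ifP => ?; try (exfalso; lia)); try done).
have Gkm : (0 < km)%N -> G km = g' km + posp (g' k.+1) + posp vB - posp (- vG) - posp (- vI).
  by move=> ?; (rewrite hG; clear hG; repeat (case: ifP => ?; try (exfalso; lia)); try done).
have Gk1m : (0 < k1m)%N -> G k1m = g' k1m + posp vD - C (s k.+1) (s k) * posp vF + 2 * posp vH -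
       C (s k.+1) (s k) * posp vI.
  by move=> ?; (rewrite hG; clear hG; repeat (case: ifP => ?; try (exfalso; lia)); try done).
have Gout : forall v, (0 < v)%N -> v != km -> v != k1m -> (v < k)%N \/ (k + 5 < v)%N -> G v = g' v.
  by move=> v *; (rewrite hG; clear hG; repeat (case: ifP => ?; try (exfalso; lia)); try done).
move=> km1 km2 k1m1 k1m2 hab hout hout' hout'' hcone hC hoff hdiag.
have skm : (0 < km)%N -> s km = s k by move=> /km2 [_ /eqP].
have sk1m : (0 < k1m)%N -> s k1m = s k.+1 by move=> /k1m2 [_ /eqP].
move=> u u0 N hN.
pose M := maxn (maxn N N') k.+2.+4.
have hNM : (N <= M)%N by rewrite /M; lia.
have hkM : (k.+1.+4 < M)%N by rewrite /M; lia.
have hM' : forall v, (M <= v)%N -> g' v = 0 by move=> v hv; apply: hN'; move: hv; rewrite /M; lia.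
have hc : forall w, (0 < w)%N -> 0 <= \sum_(w <= v < M | s' v == s' w) g' v.
  by move=> w w0; exact: hcone w w0 M hM'.
rewrite (ext_bound _ _ _ _ _ hN hNM).
clearbody M.
have tail : forall w c, (k.+1.+4 < w)%N ->
    \sum_(w <= v < M | s v == c) G v = \sum_(w <= v < M | s' v == c) g' v.
  move=> w c hw; apply: L_eq => v hv; first by rewrite hout'' //; lia.
  by move=> _; apply: Gout; [lia|lia|lia|right; lia].
have Sother : forall c, s k != c -> s k.+1 != c ->
    \sum_(k <= v < M | s v == c) G v = \sum_(k <= v < M | s' v == c) g' v.
  move=> c nk nk1.
  do 6 (rewrite peel; [|lia]).
  rewrite [in RHS]peel; [|lia]. rewrite [in RHS]peel; [|lia]. rewrite [in RHS]peel; [|lia].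
  rewrite [in RHS]peel; [|lia]. rewrite [in RHS]peel; [|lia]. rewrite [in RHS]peel; [|lia].
  rewrite tail //.
  rewrite -?e2 -?e4 -?f3 -?f5 -?e1' -?e3' -?e5' -?f0' -?f2' -?f4' ?(negbTE nk) ?(negbTE nk1) /=.
  by rewrite !add0r.
set Ti := \sum_(k.+2.+4 <= v < M | s' v == s k) g' v.
set Tj := \sum_(k.+2.+4 <= v < M | s' v == s k.+1) g' v.
have SGi0 : \sum_(k <= v < M | s v == s k) G v = G k + G k.+2 + G k.+4 + Ti.
  by rewrite (peel _ _ k); [|lia]; rewrite (peel _ _ k.+1); [|lia]; rewrite (peel _ _ k.+2); [|lia];
     rewrite (peel _ _ k.+3); [|lia]; rewrite (peel _ _ k.+4); [|lia];
     rewrite (peel _ _ k.+1.+4); [|lia]; rewrite tail //;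
     rewrite -?e2 -?e4 -?f3 -?f5 ?eqxx ?(negbTE hij) ?(negbTE hji) /=; rewrite /Ti; ring.
have SGi2 : \sum_(k.+2 <= v < M | s v == s k) G v = G k.+2 + G k.+4 + Ti.
  by repeat (rewrite peel; [|lia]); rewrite tail //; rewrite -?e2 -?e4 -?f3 -?f5 -?e1' -?e3' -?e5' -?f0' -?f2' -?f4' ?eqxx ?(negbTE hij) ?(negbTE hji) /=; rewrite /Ti /Tj; ring.
have SGi4 : \sum_(k.+4 <= v < M | s v == s k) G v = G k.+4 + Ti.
  by repeat (rewrite peel; [|lia]); rewrite tail //; rewrite -?e2 -?e4 -?f3 -?f5 -?e1' -?e3' -?e5' -?f0' -?f2' -?f4' ?eqxx ?(negbTE hij) ?(negbTE hji) /=; rewrite /Ti /Tj; ring.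
have SGj0 : \sum_(k <= v < M | s v == s k.+1) G v = G k.+1 + G k.+3 + G k.+1.+4 + Tj.
  by repeat (rewrite peel; [|lia]); rewrite tail //; rewrite -?e2 -?e4 -?f3 -?f5 -?e1' -?e3' -?e5' -?f0' -?f2' -?f4' ?eqxx ?(negbTE hij) ?(negbTE hji) /=; rewrite /Ti /Tj; ring.
have SGj1 : \sum_(k.+1 <= v < M | s v == s k.+1) G v = G k.+1 + G k.+3 + G k.+1.+4 + Tj.
  by repeat (rewrite peel; [|lia]); rewrite tail //; rewrite -?e2 -?e4 -?f3 -?f5 -?e1' -?e3' -?e5' -?f0' -?f2' -?f4' ?eqxx ?(negbTE hij) ?(negbTE hji) /=; rewrite /Ti /Tj; ring.
have SGj3 : \sum_(k.+3 <= v < M | s v == s k.+1) G v = G k.+3 + G k.+1.+4 + Tj.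
  by repeat (rewrite peel; [|lia]); rewrite tail //; rewrite -?e2 -?e4 -?f3 -?f5 -?e1' -?e3' -?e5' -?f0' -?f2' -?f4' ?eqxx ?(negbTE hij) ?(negbTE hji) /=; rewrite /Ti /Tj; ring.
have SGj5 : \sum_(k.+1.+4 <= v < M | s v == s k.+1) G v = G k.+1.+4 + Tj.
  by repeat (rewrite peel; [|lia]); rewrite tail //; rewrite -?e2 -?e4 -?f3 -?f5 -?e1' -?e3' -?e5' -?f0' -?f2' -?f4' ?eqxx ?(negbTE hij) ?(negbTE hji) /=; rewrite /Ti /Tj; ring.
have Sgi0 : \sum_(k <= v < M | s' v == s k) g' v = g' k.+1 + g' k.+3 + g' k.+1.+4 + Ti.
  by repeat (rewrite peel; [|lia]); rewrite -?e2 -?e4 -?f3 -?f5 -?e1' -?e3' -?e5' -?f0' -?f2' -?f4' ?eqxx ?(negbTE hij) ?(negbTE hji) /=; rewrite /Ti /Tj; ring.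
have Sgi1 : \sum_(k.+1 <= v < M | s' v == s k) g' v = g' k.+1 + g' k.+3 + g' k.+1.+4 + Ti.
  by repeat (rewrite peel; [|lia]); rewrite -?e2 -?e4 -?f3 -?f5 -?e1' -?e3' -?e5' -?f0' -?f2' -?f4' ?eqxx ?(negbTE hij) ?(negbTE hji) /=; rewrite /Ti /Tj; ring.
have Sgi3 : \sum_(k.+3 <= v < M | s' v == s k) g' v = g' k.+3 + g' k.+1.+4 + Ti.
  by repeat (rewrite peel; [|lia]); rewrite -?e2 -?e4 -?f3 -?f5 -?e1' -?e3' -?e5' -?f0' -?f2' -?f4' ?eqxx ?(negbTE hij) ?(negbTE hji) /=; rewrite /Ti /Tj; ring.
have Sgi5 : \sum_(k.+1.+4 <= v < M | s' v == s k) g' v = g' k.+1.+4 + Ti.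
  by repeat (rewrite peel; [|lia]); rewrite -?e2 -?e4 -?f3 -?f5 -?e1' -?e3' -?e5' -?f0' -?f2' -?f4' ?eqxx ?(negbTE hij) ?(negbTE hji) /=; rewrite /Ti /Tj; ring.
have Sgj0 : \sum_(k <= v < M | s' v == s k.+1) g' v = g' k + g' k.+2 + g' k.+4 + Tj.
  by repeat (rewrite peel; [|lia]); rewrite -?e2 -?e4 -?f3 -?f5 -?e1' -?e3' -?e5' -?f0' -?f2' -?f4' ?eqxx ?(negbTE hij) ?(negbTE hji) /=; rewrite /Ti /Tj; ring.
have Sgj2 : \sum_(k.+2 <= v < M | s' v == s k.+1) g' v = g' k.+2 + g' k.+4 + Tj.
  by repeat (rewrite peel; [|lia]); rewrite -?e2 -?e4 -?f3 -?f5 -?e1' -?e3' -?e5' -?f0' -?f2' -?f4' ?eqxx ?(negbTE hij) ?(negbTE hji) /=; rewrite /Ti /Tj; ring.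
have Sgj4 : \sum_(k.+4 <= v < M | s' v == s k.+1) g' v = g' k.+4 + Tj.
  by repeat (rewrite peel; [|lia]); rewrite -?e2 -?e4 -?f3 -?f5 -?e1' -?e3' -?e5' -?f0' -?f2' -?f4' ?eqxx ?(negbTE hij) ?(negbTE hji) /=; rewrite /Ti /Tj; ring.
have Q1 : 0 <= g' k.+1.+4 + Ti by move: (hc k.+1.+4 (ltn0Sn _)); rewrite -e5' Sgi5.
have Q2 : 0 <= g' k.+3 + g' k.+1.+4 + Ti by move: (hc k.+3 (ltn0Sn _)); rewrite -e3' Sgi3.
have Q3 : 0 <= g' k.+1 + g' k.+3 + g' k.+1.+4 + Ti by move: (hc k.+1 (ltn0Sn _)); rewrite -e1' Sgi1.
have Q4 : 0 <= g' k.+4 + Tj by move: (hc k.+4 (ltn0Sn _)); rewrite -f4' Sgj4.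
have Q5 : 0 <= g' k.+2 + g' k.+4 + Tj by move: (hc k.+2 (ltn0Sn _)); rewrite -f2' Sgj2.
have Q6 : 0 <= g' k + g' k.+2 + g' k.+4 + Tj by move: (hc k k0); rewrite -f0' Sgj0.
have [c1 [c2 [c3 [c4 [c5 [c6 [c7 c8]]]]]]] :=
  core _ _ _ _ _ _ _ _ _ _ _ _ _ _ _ _ _ _ _ hab eA eB eC eD eE eF eG eH eI Q1 Q2 Q3 Q4 Q5 Q6.
case: (ltnP k.+1.+4 u) => hu.
  rewrite tail // -(hout'' u) //; last by lia.
  exact: hc.
case: (leqP k u) => hku.
  have : u = k \/ u = k.+1 \/ u = k.+2 \/ u = k.+3 \/ u = k.+4 \/ u = k.+1.+4 by lia.
  case=> [->|[->|[->|[->|[->|->]]]]].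
  - rewrite SGi0; lia.
  - rewrite SGj1; lia.
  - rewrite -e2 SGi2; lia.
  - rewrite -f3 SGj3; lia.
  - rewrite -e4 SGi4; lia.
  - rewrite -f5 SGj5; lia.
have hu' : s' u = s u by apply: hout'; lia.
have hku' : (u <= k)%N by lia.
have hkM' : (k <= M)%N by lia.
have hcu := hc u u0.
rewrite hu' (big_cat_nat hku' hkM') /= in hcu.
rewrite (big_cat_nat hku' hkM') /=.
have hP : forall c v, (u <= v < k)%N -> (s v == c) = (s' v == c).
  by move=> c v hv; rewrite hout' //; lia.
case: (eqVneq (s u) (s k)) => [ei|ni].
  have ukm : (u <= km)%N by apply: km1; [lia | rewrite ei].
  have km0 : (0 < km)%N by lia.
  have kmk : (km < k)%N by lia.
  rewrite ei in hcu *.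
  rewrite SGi0; rewrite Sgi0 in hcu.
  have hf : forall v, (u <= v < k)%N -> v != km -> s v == s k -> G v = g' v.
    move=> v hv hvk /eqP sv; apply: Gout => //; [lia| |left; lia].
    apply/eqP => e; have k1m0 : (0 < k1m)%N by lia.
    by move: (sk1m k1m0); rewrite -e sv => /eqP; rewrite (negbTE hij).
  have hr : (u <= km < k)%N by lia.
  rewrite (L_split G g' (fun v => s v == s k) (fun v => s' v == s k) u km k hr (hP _) hf) /=.
  rewrite (skm km0) eqxx (Gkm km0).
  set S := \sum_(u <= v < k | s' v == s k) g' v in hcu *; lia.
case: (eqVneq (s u) (s k.+1)) => [ej|nj].
  have uk1m : (u <= k1m)%N by apply: k1m1; [lia | rewrite ej].
  have k1m0 : (0 < k1m)%N by lia.
  have k1mk : (k1m < k)%N by lia.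
  rewrite ej in hcu *.
  rewrite SGj0; rewrite Sgj0 in hcu.
  have hf : forall v, (u <= v < k)%N -> v != k1m -> s v == s k.+1 -> G v = g' v.
    move=> v hv hvk /eqP sv; apply: Gout => //; [lia| |left; lia].
    apply/eqP => e; have km0 : (0 < km)%N by lia.
    by move: (skm km0); rewrite -e sv => /eqP; rewrite (negbTE hji).
  have hr : (u <= k1m < k)%N by lia.
  rewrite (L_split G g' (fun v => s v == s k.+1) (fun v => s' v == s k.+1) u k1m k hr (hP _) hf) /=.
  rewrite (sk1m k1m0) eqxx (Gk1m k1m0).
  set S := \sum_(u <= v < k | s' v == s k.+1) g' v in hcu *; lia.
have hf : forall v, (u <= v < k)%N -> s v == s u -> G v = g' v.
  move=> v hv /eqP sv; apply: Gout; [lia| | |left; lia].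
  - apply/eqP => e; have km0 : (0 < km)%N by lia.
    by move: (skm km0); rewrite -e sv => e'; rewrite e' eqxx in ni.
  - apply/eqP => e; have k1m0 : (0 < k1m)%N by lia.
    by move: (sk1m k1m0); rewrite -e sv => e'; rewrite e' eqxx in nj.
rewrite (L_eq G g' (fun v => s v == s u) (fun v => s' v == s u) u k (hP _) hf) /=.
by rewrite Sother ?(negbTE ni) ?(negbTE nj) // eq_sym.
Qed.
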